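(* Let $(X,V)$ and $(\overline{X},\overline{V})$ be solutions of the discrete Motsch–Tadmor model (as in the context) whose initial data satisfy \[ \max\{\|\Delta^x(0)\|_F,\|\Delta^{\overline{x}}(0)\|_F\}<M,\quad \|\Delta^v(0)\|_F<\kappa\int_{\|\Delta^x(0)\|_F}^M\psi(s)\,ds,\quad \|\Delta^{\overline{v}}(0)\|_F<\kappa\int_{\|\Delta^{\overline{x}}(0)\|_F}^M\psi(s)\,ds, \] and let $C\in(0,1)$. Then there are constants $\bar c_0,\bar c_1,\bar c_2\ge0$ depending on $V(0)$, $\overline{V}(0)$ and the model parameters such that, for $h>0$ sufficiently small and any $0\le\epsilon\le1$, setting \[ b_1(\epsilon,h)=(\bar c_0\epsilon+\bar c_1h+\bar c_2h^2)^{1/2},\qquad b_2(h)=C\kappa\psi(M)h, \] one has for all $n\ge0$ \[ \|\Delta^v(n+1)-\Delta^{\overline{v}}(n+1)\|_F\le(1-\epsilon)\|\Delta^v(n)-\Delta^{\overline{v}}(n)\|_F+b_1e^{-b_2n}. \]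
   Context: Discrete MT model: fix $N\ge1$, $d\ge1$, $\kappa>0$, $h>0$, and $a:[0,\infty)\to\mathbb{R}$ with constants $0<c_1\le c_2$, $c_1\le a\le c_2$, $|a(r_1)-a(r_2)|\le L_a|r_1-r_2|$ ($L_a>0$); $0<h<\min\{1,1/\kappa\}$. A solution satisfies $x_i(n+1)=x_i(n)+hv_i(n)$, $v_i(n+1)=v_i(n)+h\kappa\sum_j\phi_{ij}(n)(v_j(n)-v_i(n))$ with $\phi_{ij}(n)=\frac{a(\|x_i(n)-x_j(n)\|)}{\sum_ka(\|x_i(n)-x_k(n)\|)}$, $x_i,v_i\in\mathbb{R}^d$. Notation: $\Delta^x_{ij}=x_i-x_j$, $\Delta^v_{ij}=v_i-v_j$, similarly $\Delta^{\overline{x}},\Delta^{\overline{v}}$ for the second solution; $\|A\|_F=(\sum_{i,j}\|A_{ij}\|^2)^{1/2}$. Constants: $\|\phi\|_{\mathrm{Lip}}=\frac{L_a}{Nc_1}(1+\frac{c_2}{c_1})$, $M=\frac{1}{4N\|\phi\|_{\mathrm{Lip}}}$, $\psi(s)=1-\|\phi\|_{\mathrm{Lip}}Ns$. *)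

(* Defs.v *)
From Stdlib Require Import Reals.
From Coquelicot Require Import Coquelicot.
Open Scope R_scope.

Fixpoint sumR (n : nat) (f : nat -> R) : R :=
  match n with
  | O => 0
  | S m => sumR m f + f m
  end.

(* vectors in R^d are represented by their coordinates k < d *)
Definition vec := nat -> R.

Definition enorm (d : nat) (u : vec) : R := sqrt (sumR d (fun k => (u k) ^ 2)).

Definition phiMT (N d : nat) (a : R -> R) (x : nat -> vec) (i j : nat) : R :=
  a (enorm d (fun k => x i k - x j k)) /
  sumR N (fun l => a (enorm d (fun k => x i k - x l k))).

Definition MT_solution (N d : nat) (kappa h : R) (a : R -> R)
  (x v : nat -> nat -> vec) : Prop :=
  forall (n i k : nat), (i < N)%nat -> (k < d)%nat ->
    x (S n) i k = x n i k + h * v n i k /\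
    v (S n) i k = v n i k +
      h * kappa * sumR N (fun j => phiMT N d a (x n) i j * (v n j k - v n i k)).

Definition DeltaM (x : nat -> vec) : nat -> nat -> vec :=
  fun i j k => x i k - x j k.

Definition frob (N d : nat) (A : nat -> nat -> vec) : R :=
  sqrt (sumR N (fun i => sumR N (fun j => (enorm d (A i j)) ^ 2))).

Definition mdiff (A B : nat -> nat -> vec) : nat -> nat -> vec :=
  fun i j k => A i j k - B i j k.

Definition phiLip (N : nat) (La c1 c2 : R) : R :=
  La / (INR N * c1) * (1 + c2 / c1).
Definition Mconst (N : nat) (La c1 c2 : R) : R :=
  1 / (4 * INR N * phiLip N La c1 c2).
Definition psi (N : nat) (La c1 c2 : R) (s : R) : R :=
  1 - phiLip N La c1 c2 * INR N * s.

(* Main.v *)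
Require Import Defs.
From Stdlib Require Import Reals Lra Lia Psatz.
From Coquelicot Require Import Coquelicot.
Open Scope R_scope.

Lemma sumR_ext n f g : (forall i, (i < n)%nat -> f i = g i) -> sumR n f = sumR n g.
Proof. induction n; simpl; intros H; auto. rewrite IHn by (intros; apply H; lia). rewrite H by lia. auto. Qed.

Lemma sumR_le n f g : (forall i, (i < n)%nat -> f i <= g i) -> sumR n f <= sumR n g.
Proof. induction n; simpl; intros H; [lra|]. assert (H1 := H n ltac:(lia)). assert (sumR n f <= sumR n g) by (apply IHn; intros; apply H; lia). lra. Qed.

Lemma sumR_nonneg n f : (forall i, (i < n)%nat -> 0 <= f i) -> 0 <= sumR n f.
Proof. intros H. replace 0 with (sumR n (fun _ => 0)). apply sumR_le; auto.
  induction n; simpl; auto. rewrite IHn; [lra|intros; apply H; lia]. Qed.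

Lemma sumR_plus n f g : sumR n (fun i => f i + g i) = sumR n f + sumR n g.
Proof. induction n; simpl; [lra|]. rewrite IHn; lra. Qed.

Lemma sumR_minus n f g : sumR n (fun i => f i - g i) = sumR n f - sumR n g.
Proof. induction n; simpl; [lra|]. rewrite IHn; lra. Qed.

Lemma sumR_scal n c f : sumR n (fun i => c * f i) = c * sumR n f.
Proof. induction n; simpl; [lra|]. rewrite IHn; lra. Qed.

Lemma sumR_const n c : sumR n (fun _ => c) = INR n * c.
Proof. induction n; simpl sumR; [simpl; lra|]. rewrite IHn, S_INR; lra. Qed.

Lemma sumR_term_le n f i : (forall j, (j < n)%nat -> 0 <= f j) -> (i < n)%nat -> f i <= sumR n f.
Proof. induction n; intros H Hi; [lia|]. simpl.
  destruct (Nat.eq_dec i n) as [->|].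
  - assert (0 <= sumR n f) by (apply sumR_nonneg; intros; apply H; lia). lra.
  - assert (f i <= sumR n f) by (apply IHn; [intros; apply H|]; lia). assert (0 <= f n) by (apply H; lia). lra. Qed.

Lemma sumR_abs n f : Rabs (sumR n f) <= sumR n (fun i => Rabs (f i)).
Proof. induction n; simpl. rewrite Rabs_R0; lra. eapply Rle_trans; [apply Rabs_triang|]. lra. Qed.

Lemma sumsq_nonneg n f : 0 <= sumR n (fun i => f i ^ 2).
Proof. apply sumR_nonneg; intros; nra. Qed.

Lemma cs_step P Q a b : 0 <= P -> 0 <= Q ->
  sqrt P * sqrt Q + a * b <= sqrt (P + a^2) * sqrt (Q + b^2).
Proof. intros HP HQ.
  assert (Hp := sqrt_pos P). assert (Hq := sqrt_pos Q).
  assert (E1 := pow2_sqrt P HP). assert (E2 := pow2_sqrt Q HQ).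
  set (p := sqrt P) in *. set (q := sqrt Q) in *.
  rewrite <- sqrt_mult by nra.
  destruct (Rle_dec (p*q + a*b) 0). { assert (0 <= sqrt ((P + a ^ 2) * (Q + b ^ 2))) by apply sqrt_pos. lra. }
  rewrite <- (sqrt_pow2 (p*q+a*b)) by lra. apply sqrt_le_1_alt.
  rewrite <- E1, <- E2. assert (0 <= (p*b - q*a)^2) by apply pow2_ge_0. nra. Qed.

Lemma CS n f g : sumR n (fun i => f i * g i) <= sqrt (sumR n (fun i => f i ^ 2)) * sqrt (sumR n (fun i => g i ^ 2)).
Proof. induction n; cbn [sumR]. rewrite sqrt_0; lra.
  eapply Rle_trans; [|apply cs_step; apply sumsq_nonneg]. lra. Qed.

Definition nrm n (f : nat -> R) := sqrt (sumR n (fun i => f i ^ 2)).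

Lemma nrm_nonneg n f : 0 <= nrm n f.
Proof. apply sqrt_pos. Qed.

Lemma nrm_sq n f : nrm n f ^ 2 = sumR n (fun i => f i ^ 2).
Proof. apply pow2_sqrt, sumsq_nonneg. Qed.

Lemma mink n f g : nrm n (fun i => f i + g i) <= nrm n f + nrm n g.
Proof. unfold nrm. rewrite <- (sqrt_pow2 (_ + _)) by (apply Rplus_le_le_0_compat; apply sqrt_pos).
  apply sqrt_le_1_alt.
  replace (sumR n (fun i => (f i + g i)^2)) with
    (sumR n (fun i => f i ^2) + 2 * sumR n (fun i => f i * g i) + sumR n (fun i => g i ^ 2)).
  2:{ rewrite <- sumR_scal, <- !sumR_plus. apply sumR_ext; intros; ring. }
  assert (H := CS n f g).
  assert (E1 := pow2_sqrt _ (sumsq_nonneg n f)). assert (E2 := pow2_sqrt _ (sumsq_nonneg n g)).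
  nra. Qed.

Lemma nrm_mono n h f : (forall i, (i < n)%nat -> Rabs (h i) <= f i) -> nrm n h <= nrm n f.
Proof. intros H. unfold nrm. apply sqrt_le_1_alt. apply sumR_le. intros i Hi.
  specialize (H i Hi). assert (0 <= Rabs (h i)) by apply Rabs_pos.
  rewrite <- (pow2_abs (h i)). nra. Qed.

Lemma nrm_tri n h f g : (forall i, (i < n)%nat -> Rabs (h i) <= f i + g i) -> nrm n h <= nrm n f + nrm n g.
Proof. intros H. eapply Rle_trans; [apply (nrm_mono n h (fun i => f i + g i)); auto|apply mink]. Qed.

Lemma nrm_scal n c f : nrm n (fun i => c * f i) = Rabs c * nrm n f.
Proof. unfold nrm. rewrite <- (sqrt_pow2 (Rabs c)) by apply Rabs_pos. rewrite <- sqrt_mult by (first [apply pow2_ge_0 | apply sumsq_nonneg]).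
  f_equal. rewrite pow2_abs, <- sumR_scal. apply sumR_ext; intros; ring. Qed.

Lemma nrm_abs n f : nrm n (fun i => Rabs (f i)) = nrm n f.
Proof. unfold nrm. f_equal. apply sumR_ext; intros. apply pow2_abs. Qed.

Lemma nrm_ext n f g : (forall i, (i < n)%nat -> f i = g i) -> nrm n f = nrm n g.
Proof. intros H; unfold nrm; f_equal; apply sumR_ext; intros; rewrite H; auto. Qed.

Lemma sum_sq_le n f : (forall i, (i < n)%nat -> 0 <= f i) -> sumR n f ^ 2 <= INR n * sumR n (fun i => f i ^ 2).
Proof. intros H. assert (Hc := CS n (fun _ => 1) f). cbv beta in Hc.
  replace (sumR n (fun i => 1 * f i)) with (sumR n f) in Hc by (apply sumR_ext; intros; ring).
  replace (sumR n (fun _ => 1 ^ 2)) with (INR n) in Hc by (rewrite sumR_const; ring).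
  assert (0 <= sumR n f) by (apply sumR_nonneg; auto).
  assert (E1 := pow2_sqrt _ (pos_INR n)). assert (E2 := pow2_sqrt _ (sumsq_nonneg n f)).
  assert (0 <= sqrt (INR n)) by apply sqrt_pos. assert (0 <= sqrt (sumR n (fun i => f i ^ 2))) by apply sqrt_pos.
  rewrite <- E1, <- E2. nra. Qed.

Lemma enorm_nrm d u : enorm d u = nrm d u.
Proof. reflexivity. Qed.

Lemma frob_nrm N d A : frob N d A = nrm N (fun i => nrm N (fun j => enorm d (A i j))).
Proof. unfold frob, nrm at 1. f_equal. apply sumR_ext. intros. unfold nrm. rewrite pow2_sqrt; auto. apply sumsq_nonneg. Qed.

Lemma frob_nonneg N d A : 0 <= frob N d A.
Proof. apply sqrt_pos. Qed.

Lemma frob_sq N d A : frob N d A ^ 2 = sumR N (fun i => sumR N (fun j => enorm d (A i j) ^ 2)).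
Proof. apply pow2_sqrt. apply sumR_nonneg; intros; apply sumsq_nonneg. Qed.

Lemma enorm_nonneg d u : 0 <= enorm d u.
Proof. apply sqrt_pos. Qed.

Lemma frob_ext N d A B : (forall i j k, (i < N)%nat -> (j < N)%nat -> (k < d)%nat -> A i j k = B i j k) ->
  frob N d A = frob N d B.
Proof. intros H. unfold frob. f_equal. apply sumR_ext; intros i Hi. apply sumR_ext; intros j Hj.
  unfold enorm. f_equal. f_equal. apply sumR_ext; intros k Hk. rewrite H; auto. Qed.

Lemma enorm_lin d w u v al be : (forall k, (k < d)%nat -> w k = al * u k + be * v k) ->
  enorm d w <= Rabs al * enorm d u + Rabs be * enorm d v.
Proof. intros H. unfold enorm. fold (nrm d u) (nrm d v) (nrm d w).
  rewrite <- !nrm_scal. rewrite <- (nrm_abs d (fun k => al * u k)), <- (nrm_abs d (fun k => be * v k)).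
  apply nrm_tri. intros k Hk. rewrite H by auto. apply Rabs_triang. Qed.

Lemma nrm_scal' n c f : 0 <= c -> c * nrm n f = nrm n (fun i => c * f i).
Proof. intros. rewrite nrm_scal, Rabs_pos_eq; auto. Qed.

Lemma frob_lin N d Cm A B al be :
  (forall i j k, (i < N)%nat -> (j < N)%nat -> (k < d)%nat -> Cm i j k = al * A i j k + be * B i j k) ->
  frob N d Cm <= Rabs al * frob N d A + Rabs be * frob N d B.
Proof. intros H. rewrite !frob_nrm.
  rewrite (nrm_scal' N (Rabs al)), (nrm_scal' N (Rabs be)) by apply Rabs_pos. apply nrm_tri. intros i Hi. cbv beta.
  rewrite Rabs_pos_eq by apply nrm_nonneg.
  rewrite (nrm_scal' N (Rabs al)), (nrm_scal' N (Rabs be)) by apply Rabs_pos. apply nrm_tri. intros j Hj. cbv beta.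
  rewrite Rabs_pos_eq by apply enorm_nonneg. apply enorm_lin. intros; apply H; auto. Qed.

Lemma enorm_rev d u w : Rabs (enorm d u - enorm d w) <= enorm d (fun k => u k - w k).
Proof. rewrite !enorm_nrm. apply Rabs_le. split.
  - assert (nrm d w <= nrm d u + nrm d (fun k => u k - w k)).
    { rewrite <- (nrm_abs d u), <- (nrm_abs d (fun k => u k - w k)). apply nrm_tri. intros k _. cbv beta.
      pose proof (Rabs_triang (u k) (-(u k - w k))) as T. rewrite Rabs_Ropp in T. replace (u k + - (u k - w k)) with (w k) in T by ring. lra. }
    unfold enorm, nrm in *; lra.
  - assert (nrm d u <= nrm d w + nrm d (fun k => u k - w k)).
    { rewrite <- (nrm_abs d w), <- (nrm_abs d (fun k => u k - w k)). apply nrm_tri. intros k _. cbv beta.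
      pose proof (Rabs_triang (w k) (u k - w k)) as T. replace (w k + (u k - w k)) with (u k) in T by ring. lra. }
    unfold enorm, nrm in *; lra. Qed.

Lemma enorm_sum d m (c : nat -> R) (w : nat -> vec) :
  enorm d (fun k => sumR m (fun l => c l * w l k)) <= sumR m (fun l => Rabs (c l) * enorm d (w l)).
Proof. induction m; cbn [sumR].
  - unfold enorm. replace (sumR d (fun k => 0 ^ 2)) with 0. rewrite sqrt_0; lra.
    induction d; cbn [sumR]; auto. rewrite <- IHd. ring.
  - eapply Rle_trans. { apply (enorm_lin d _ (fun k => sumR m (fun l => c l * w l k)) (w m) 1 (c m)). intros; ring. }
    rewrite Rabs_R1. lra. Qed.

Lemma S_bounds N d (a : R -> R) c1 c2 (x : nat -> vec) i :
  (forall r, 0 <= r -> c1 <= a r <= c2) ->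
  INR N * c1 <= sumR N (fun l => a (enorm d (fun k => x i k - x l k))) <= INR N * c2.
Proof. intros Ha. rewrite <- !sumR_const. split; apply sumR_le; intros l _; apply Ha; apply enorm_nonneg. Qed.

Lemma phi_sum N d (a : R -> R) c1 c2 x i : (1 <= N)%nat -> 0 < c1 ->
  (forall r, 0 <= r -> c1 <= a r <= c2) -> sumR N (fun l => phiMT N d a x i l) = 1.
Proof. intros HN Hc1 Ha. unfold phiMT.
  set (S := sumR N (fun l => a (enorm d (fun k => x i k - x l k)))).
  assert (HS : INR N * c1 <= S) by apply (S_bounds N d a c1 c2 x i Ha).
  assert (1 <= INR N) by (apply (le_INR 1); auto).
  rewrite (sumR_ext _ _ (fun l => / S * a (enorm d (fun k => x i k - x l k)))) by (intros; unfold Rdiv; ring).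
  rewrite sumR_scal. fold S. field. nra. Qed.

Lemma div_bound y1 y2 A Si Sj q La r c2 NN :
  0 < q -> 0 <= r -> 0 <= La -> 0 <= A <= c2 -> 0 <= y1 <= La * r -> 0 <= y2 <= NN * La * r ->
  0 < Si -> 0 < Sj -> / Si <= q -> / Sj <= q -> 0 <= NN ->
  y1 / Si + A * y2 / (Si * Sj) <= La * r * q * (1 + c2 * NN * q).
Proof. intros. unfold Rdiv. rewrite Rinv_mult.
  assert (0 < / Si) by (apply Rinv_0_lt_compat; lra). assert (0 < / Sj) by (apply Rinv_0_lt_compat; lra).
  assert (y1 * / Si <= La * r * q) by nra.
  assert (A * y2 <= c2 * (NN * La * r)) by nra.
  assert (0 <= c2 * (NN * La * r)) by nra.
  assert (/Si * /Sj <= q * q) by nra.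
  assert (0 <= A * y2) by nra.
  assert (A * y2 * (/ Si * / Sj) <= c2 * (NN * La * r) * (q * q)) by nra.
  nra. Qed.

Lemma phi_lip N d (a : R -> R) c1 c2 La x i j l : (1 <= N)%nat -> 0 < c1 -> 0 < La ->
  (forall r, 0 <= r -> c1 <= a r <= c2) ->
  (forall r1 r2, 0 <= r1 -> 0 <= r2 -> Rabs (a r1 - a r2) <= La * Rabs (r1 - r2)) ->
  Rabs (phiMT N d a x i l - phiMT N d a x j l) <= phiLip N La c1 c2 * enorm d (fun k => x i k - x j k).
Proof. intros HN Hc1 HLa Ha Hl. unfold phiMT, phiLip.
  set (r := enorm d (fun k => x i k - x j k)).
  assert (Hr : 0 <= r) by apply enorm_nonneg.
  assert (Hpair : forall m, Rabs (a (enorm d (fun k => x i k - x m k)) - a (enorm d (fun k => x j k - x m k))) <= La * r).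
  { intros m. eapply Rle_trans; [apply Hl; apply enorm_nonneg|]. apply Rmult_le_compat_l; [lra|].
    eapply Rle_trans; [apply enorm_rev|]. right. unfold r, enorm. apply f_equal. apply sumR_ext; intros; ring. }
  set (Si := sumR N (fun l => a (enorm d (fun k => x i k - x l k)))).
  set (Sj := sumR N (fun l => a (enorm d (fun k => x j k - x l k)))).
  assert (HSi : INR N * c1 <= Si) by apply (S_bounds N d a c1 c2 x i Ha).
  assert (HSj : INR N * c1 <= Sj) by apply (S_bounds N d a c1 c2 x j Ha).
  assert (1 <= INR N) by (apply (le_INR 1); auto).
  set (Ai := a (enorm d (fun k => x i k - x l k))).
  set (Aj := a (enorm d (fun k => x j k - x l k))).
  assert (HAj : c1 <= Aj <= c2) by (apply Ha; apply enorm_nonneg).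
  assert (HA : Rabs (Ai - Aj) <= La * r) by apply Hpair.
  assert (HS : Rabs (Sj - Si) <= INR N * La * r).
  { unfold Sj, Si. rewrite <- sumR_minus. eapply Rle_trans; [apply sumR_abs|].
    replace (INR N * La * r) with (INR N * (La * r)) by ring. rewrite <- sumR_const.
    apply sumR_le. intros m _. rewrite <- Rabs_Ropp. replace (- _) with (a (enorm d (fun k => x i k - x m k)) - a (enorm d (fun k => x j k - x m k))) by ring. apply Hpair. }
  assert (E : Ai / Si - Aj / Sj = (Ai - Aj) / Si + Aj * (Sj - Si) / (Si * Sj)) by (field; nra).
  rewrite E. eapply Rle_trans; [apply Rabs_triang|].
  assert (HSi0 : 0 < Si) by nra. assert (HSj0 : 0 < Sj) by nra. assert (0 < Si * Sj) by (apply Rmult_lt_0_compat; lra).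
  rewrite Rabs_div by (apply Rgt_not_eq; nra). rewrite Rabs_div by (apply Rgt_not_eq; nra). rewrite Rabs_mult.
  rewrite (Rabs_pos_eq Si), (Rabs_pos_eq Aj), (Rabs_pos_eq (Si * Sj)) by nra.
  replace (La / (INR N * c1) * (1 + c2 / c1) * r) with (La * r * / (INR N * c1) * (1 + c2 * INR N * / (INR N * c1))) by (field; nra).

  assert (0 < INR N * c1) by nra.
  apply div_bound; try lra.
  - apply Rinv_0_lt_compat; nra.
  - split; [apply Rabs_pos|auto].
  - split; [apply Rabs_pos|auto].
  - apply Rinv_le_contravar; nra.
  - apply Rinv_le_contravar; nra.
Qed.

Definition Emat N d a (x v : nat -> vec) : nat -> nat -> vec :=
  fun i j k => sumR N (fun l => (phiMT N d a x j l - phiMT N d a x i l) * DeltaM v i l k).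

Lemma Emat_bound N d (a : R -> R) c1 c2 La x v : (1 <= N)%nat -> 0 < c1 -> 0 < La ->
  (forall r, 0 <= r -> c1 <= a r <= c2) ->
  (forall r1 r2, 0 <= r1 -> 0 <= r2 -> Rabs (a r1 - a r2) <= La * Rabs (r1 - r2)) ->
  frob N d (Emat N d a x v) <= phiLip N La c1 c2 * INR N * frob N d (DeltaM x) * frob N d (DeltaM v).
Proof. intros HN Hc1 HLa Ha Hl.
  set (L := phiLip N La c1 c2).
  assert (HL : 0 < L). { unfold L, phiLip. assert (1 <= INR N) by (apply (le_INR 1); auto).
    apply Rmult_lt_0_compat. apply Rdiv_lt_0_compat; [lra|apply Rmult_lt_0_compat; lra]. assert (Hc2 := Ha 0 (Rle_refl 0)); assert (0 < c2/c1) by (apply Rdiv_lt_0_compat; lra). lra. }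
  set (X := frob N d (DeltaM x)). set (V := frob N d (DeltaM v)).
  assert (HX : 0 <= X) by apply frob_nonneg. assert (HV : 0 <= V) by apply frob_nonneg.
  assert (HN' : 1 <= INR N) by (apply (le_INR 1); auto).
  assert (Hent : forall i j, (i < N)%nat -> (j < N)%nat ->
     enorm d (Emat N d a x v i j) ^ 2 <= (L^2 * INR N * V^2) * enorm d (DeltaM x i j) ^ 2).
  { intros i j Hi Hj.
    set (r := enorm d (DeltaM x i j)). assert (Hr : 0 <= r) by apply enorm_nonneg.
    set (W := fun l => enorm d (DeltaM v i l)).
    assert (H1 : enorm d (Emat N d a x v i j) <= L * r * sumR N W).
    { unfold Emat. eapply Rle_trans; [apply (enorm_sum d N (fun l => phiMT N d a x j l - phiMT N d a x i l) (fun l => DeltaM v i l))|].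
      rewrite <- sumR_scal. apply sumR_le. intros l _. unfold W.
      rewrite Rabs_minus_sym. apply Rmult_le_compat_r; [apply enorm_nonneg|].
      apply phi_lip; auto. }
    assert (H2 : sumR N W ^ 2 <= INR N * sumR N (fun l => W l ^ 2)) by (apply sum_sq_le; intros; apply enorm_nonneg).
    assert (H3 : sumR N (fun l => W l ^ 2) <= V ^ 2).
    { unfold V. rewrite frob_sq. apply (sumR_term_le N (fun i => sumR N (fun j => enorm d (DeltaM v i j) ^ 2)) i); auto.
      intros; apply sumsq_nonneg. }
    assert (H0 : 0 <= enorm d (Emat N d a x v i j)) by apply enorm_nonneg.
    assert (HW : 0 <= sumR N W) by (apply sumR_nonneg; intros; apply enorm_nonneg).
    assert (H4 : enorm d (Emat N d a x v i j) ^ 2 <= (L * r * sumR N W) ^ 2) by (apply pow_incr; auto).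
    assert (H5 : (L * r * sumR N W) ^ 2 = L^2 * r^2 * sumR N W ^ 2) by ring.
    assert (0 <= L^2 * r^2) by nra.
    assert (H6 : L^2 * r^2 * sumR N W ^ 2 <= L^2 * r^2 * (INR N * V^2)).
    { apply Rmult_le_compat_l; auto. assert (0 <= INR N) by lra. nra. }
    nra. }
  assert (Hsq : frob N d (Emat N d a x v) ^ 2 <= (L^2 * INR N * V^2) * X ^ 2).
  { rewrite frob_sq. unfold X. rewrite frob_sq. rewrite <- sumR_scal. apply sumR_le; intros i Hi.
    rewrite <- sumR_scal. apply sumR_le; intros j Hj. apply Hent; auto. }
  assert (HF := frob_nonneg N d (Emat N d a x v)).
  assert (0 <= L * INR N * X * V) by (apply Rmult_le_pos; [apply Rmult_le_pos; [apply Rmult_le_pos|]|]; lra).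
  assert (Hsq2 : frob N d (Emat N d a x v) ^ 2 <= (L * INR N * X * V) ^ 2).
  { eapply Rle_trans; [apply Hsq|]. assert (INR N <= INR N * INR N) by nra.
    assert (0 <= L^2 * V^2 * X^2) by nra.
    replace ((L * INR N * X * V) ^ 2) with (L^2 * V^2 * X^2 * (INR N * INR N)) by ring.
    replace (L ^ 2 * INR N * V ^ 2 * X ^ 2) with (L^2 * V^2 * X^2 * INR N) by ring.
    apply Rmult_le_compat_l; auto. }
  destruct (Rle_dec (frob N d (Emat N d a x v)) (L * INR N * X * V)); auto.
  exfalso. assert (L * INR N * X * V < frob N d (Emat N d a x v)) by lra. nra.
Qed.

Lemma v_ident N d kappa h (a : R -> R) c1 c2 x v n i j k :
  (1 <= N)%nat -> 0 < c1 -> (forall r, 0 <= r -> c1 <= a r <= c2) ->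
  MT_solution N d kappa h a x v -> (i < N)%nat -> (j < N)%nat -> (k < d)%nat ->
  DeltaM (v (S n)) i j k = (1 - h * kappa) * DeltaM (v n) i j k + h * kappa * Emat N d a (x n) (v n) i j k.
Proof. intros HN Hc1 Ha Hs Hi Hj Hk. unfold DeltaM at 1.
  destruct (Hs n i k Hi Hk) as [_ Hvi]. destruct (Hs n j k Hj Hk) as [_ Hvj]. rewrite Hvi, Hvj.
  set (p := phiMT N d a (x n)).
  assert (HE : Emat N d a (x n) (v n) i j k = DeltaM (v n) i j k + sumR N (fun l => p i l * (v n l k - v n i k)) - sumR N (fun l => p j l * (v n l k - v n j k))).
  { unfold Emat. fold p.
    rewrite (sumR_ext _ _ (fun l => DeltaM (v n) i j k * p j l + (p i l * (v n l k - v n i k) - p j l * (v n l k - v n j k)))).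
    2:{ intros l _. unfold DeltaM. ring. }
    rewrite sumR_plus, sumR_minus, sumR_scal. unfold p. rewrite (phi_sum N d a c1 c2); auto. ring. }
  rewrite HE. unfold DeltaM. fold p. ring. Qed.

Lemma x_ident N d kappa h (a : R -> R) x v n i j k :
  MT_solution N d kappa h a x v -> (i < N)%nat -> (j < N)%nat -> (k < d)%nat ->
  DeltaM (x (S n)) i j k = 1 * DeltaM (x n) i j k + h * DeltaM (v n) i j k.
Proof. intros Hs Hi Hj Hk. unfold DeltaM.
  destruct (Hs n i k Hi Hk) as [Hxi _]. destruct (Hs n j k Hj Hk) as [Hxj _]. rewrite Hxi, Hxj. ring. Qed.

Lemma steps N d kappa h (a : R -> R) c1 c2 La x v n :
  (1 <= N)%nat -> 0 < c1 -> 0 < La ->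
  (forall r, 0 <= r -> c1 <= a r <= c2) ->
  (forall r1 r2, 0 <= r1 -> 0 <= r2 -> Rabs (a r1 - a r2) <= La * Rabs (r1 - r2)) ->
  MT_solution N d kappa h a x v -> 0 < h -> 0 < kappa -> h * kappa <= 1 ->
  let X := frob N d (DeltaM (x n)) in let V := frob N d (DeltaM (v n)) in
  let P := phiLip N La c1 c2 * INR N in
  frob N d (DeltaM (x (S n))) <= X + h * V /\
  frob N d (DeltaM (v (S n))) <= (1 - h * kappa) * V + h * kappa * (P * X * V) /\
  frob N d (mdiff (DeltaM (v (S n))) (DeltaM (v n))) <= h * kappa * (V + P * X * V).
Proof. intros HN Hc1 HLa Ha Hl Hs Hh Hk Hhk X V P.
  assert (HE := Emat_bound N d a c1 c2 La (x n) (v n) HN Hc1 HLa Ha Hl). fold X V P in HE.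
  split; [|split].
  - eapply Rle_trans. { apply (frob_lin N d _ (DeltaM (x n)) (DeltaM (v n)) 1 h). intros; eapply x_ident; eauto. }
    rewrite Rabs_R1, Rabs_pos_eq by lra. fold X V. lra.
  - eapply Rle_trans. { apply (frob_lin N d _ (DeltaM (v n)) (Emat N d a (x n) (v n)) (1 - h * kappa) (h * kappa)). intros; apply (v_ident N d kappa h a c1 c2); auto. }
    rewrite !Rabs_pos_eq by nra. fold V. assert (0 <= h * kappa) by nra. nra.
  - eapply Rle_trans. { apply (frob_lin N d _ (DeltaM (v n)) (Emat N d a (x n) (v n)) (- (h * kappa)) (h * kappa)).
      intros. unfold mdiff. rewrite (v_ident N d kappa h a c1 c2 x v n); auto. ring. }
    rewrite Rabs_Ropp, !Rabs_pos_eq by nra. fold V. assert (0 <= h * kappa) by nra. nra.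
Qed.

Lemma PM_quarter N La c1 c2 : (1 <= N)%nat -> 0 < La -> 0 < c1 -> c1 <= c2 ->
  0 < phiLip N La c1 c2 * INR N /\ phiLip N La c1 c2 * INR N * Mconst N La c1 c2 = 1/4.
Proof. intros HN HLa Hc1 Hc12. assert (1 <= INR N) by (apply (le_INR 1); auto).
  unfold Mconst, phiLip. assert (0 < c2 / c1) by (apply Rdiv_lt_0_compat; lra).
  assert (0 < La / (INR N * c1)) by (apply Rdiv_lt_0_compat; [lra|apply Rmult_lt_0_compat; lra]).
  split. { apply Rmult_lt_0_compat; [apply Rmult_lt_0_compat|]; lra. }
  field. repeat split; lra. Qed.

Definition Gf kappa P s := kappa * (s - P * s ^ 2 / 2).

Lemma invariant N d kappa h (a : R -> R) c1 c2 La x v :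
  (1 <= N)%nat -> 0 < c1 -> c1 <= c2 -> 0 < La ->
  (forall r, 0 <= r -> c1 <= a r <= c2) ->
  (forall r1 r2, 0 <= r1 -> 0 <= r2 -> Rabs (a r1 - a r2) <= La * Rabs (r1 - r2)) ->
  MT_solution N d kappa h a x v -> 0 < h -> 0 < kappa -> h * kappa < 1 ->
  let P := phiLip N La c1 c2 * INR N in let M := Mconst N La c1 c2 in
  frob N d (DeltaM (x O)) < M ->
  frob N d (DeltaM (v O)) + Gf kappa P (frob N d (DeltaM (x O))) < Gf kappa P M ->
  forall n, frob N d (DeltaM (x n)) < M /\
    frob N d (DeltaM (v n)) + Gf kappa P (frob N d (DeltaM (x n))) <=
      frob N d (DeltaM (v O)) + Gf kappa P (frob N d (DeltaM (x O))) /\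
    frob N d (DeltaM (v n)) <= exp (- (3/4 * kappa * h) * INR n) * frob N d (DeltaM (v O)).
Proof. intros HN Hc1 Hc12 HLa Ha Hl Hs Hh Hk Hhk P M HX0 HG0.
  destruct (PM_quarter N La c1 c2 HN HLa Hc1 Hc12) as [HP HPM]. fold P M in HP, HPM.
  set (X0 := frob N d (DeltaM (x O))) in *. set (V0 := frob N d (DeltaM (v O))) in *.
  assert (HX0n : 0 <= X0) by apply frob_nonneg. assert (HV0n : 0 <= V0) by apply frob_nonneg.
  assert (HM : 0 < M) by nra.
  assert (HV0M : V0 < kappa * M).
  { unfold Gf in HG0. assert (P * M^2 - P * X0^2 >= 0) by nra. nra. }
  induction n as [|n IH].
  - fold X0 V0. split; [exact HX0|split; [lra|]]. simpl INR. rewrite Rmult_0_r, exp_0. lra.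
  - destruct IH as [HX [HG HV]].
    destruct (steps N d kappa h a c1 c2 La x v n HN Hc1 HLa Ha Hl Hs Hh Hk ltac:(lra)) as [SX [SV _]].
    fold P in SV.
    set (X := frob N d (DeltaM (x n))) in *. set (V := frob N d (DeltaM (v n))) in *.
    set (X' := frob N d (DeltaM (x (S n)))) in *. set (V' := frob N d (DeltaM (v (S n)))) in *.
    assert (HXn : 0 <= X) by apply frob_nonneg. assert (HVn : 0 <= V) by apply frob_nonneg.
    assert (HX'n : 0 <= X') by apply frob_nonneg. assert (HV'n : 0 <= V') by apply frob_nonneg.
    assert (HPX : P * X <= 1/4) by nra.
    assert (Hhk0 : 0 < h * kappa) by nra.
    assert (SV2 : V' <= (1 - h * kappa * (1 - P * X)) * V) by nra.
    assert (SV3 : V' <= (1 - 3/4 * kappa * h) * V).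
    { eapply Rle_trans; [apply SV2|]. apply Rmult_le_compat_r; auto. nra. }
    assert (Hexp : 0 <= exp (- (3 / 4 * kappa * h) * INR n)) by (left; apply exp_pos).
    assert (Hexp1 : exp (- (3 / 4 * kappa * h) * INR n) <= 1).
    { rewrite <- exp_0. destruct (Req_dec (INR n) 0) as [E|E]. rewrite E, Rmult_0_r; lra.
      left. apply exp_increasing. assert (0 <= INR n) by apply pos_INR. nra. }
    assert (HVV0 : V <= V0) by nra.
    assert (HGc : Gf kappa P X' <= Gf kappa P X + kappa * (1 - P * X) * (X' - X)).
    { unfold Gf. assert (0 <= kappa * P * (X' - X)^2) by (apply Rmult_le_pos; [nra|apply pow2_ge_0]). lra. }
    assert (HGd : kappa * (1 - P * X) * (X' - X) <= kappa * (1 - P * X) * (h * V)).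
    { apply Rmult_le_compat_l; [nra|lra]. }
    assert (HG' : V' + Gf kappa P X' <= V + Gf kappa P X) by nra.
    split; [|split].
    + destruct (Rlt_dec X' M) as [|Hc]; auto. exfalso.
      assert (X' < 2 * M) by nra.
      assert (Gf kappa P X' - Gf kappa P M = kappa * (X' - M) * (1 - P * (X' + M) / 2)) by (unfold Gf; field).
      assert (0 <= kappa * (X' - M)) by nra.
      assert (0 < 1 - P * (X' + M) / 2) by nra.
      assert (0 <= kappa * (X' - M) * (1 - P * (X' + M) / 2)) by nra.
      lra.
    + lra.
    + eapply Rle_trans; [apply SV3|].
      assert (Hq : 1 - 3 / 4 * kappa * h <= exp (- (3 / 4 * kappa * h))).
      { left. replace (1 - 3 / 4 * kappa * h) with (1 + - (3 / 4 * kappa * h)) by ring. apply exp_ineq1. nra. }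
      rewrite S_INR. replace (- (3 / 4 * kappa * h) * (INR n + 1)) with (- (3 / 4 * kappa * h) + - (3 / 4 * kappa * h) * INR n) by ring.
      rewrite exp_plus.
      apply Rle_trans with (exp (- (3 / 4 * kappa * h)) * (exp (- (3 / 4 * kappa * h) * INR n) * V0)); [|right; ring].
      apply Rmult_le_compat; [nra|auto|auto|auto].
Qed.

Lemma RInt_psi N La c1 c2 lo hi :
  RInt (psi N La c1 c2) lo hi = (hi - phiLip N La c1 c2 * INR N * hi ^ 2 / 2) - (lo - phiLip N La c1 c2 * INR N * lo ^ 2 / 2).
Proof. set (P := phiLip N La c1 c2 * INR N).
  apply is_RInt_unique.
  assert (H := is_RInt_derive (fun s => s - P * s ^ 2 / 2) (psi N La c1 c2) lo hi).
  apply H.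
  - intros s _. unfold psi. fold P. auto_derive; auto. field.
  - intros s _. unfold psi. apply (ex_derive_continuous (fun s => 1 - phiLip N La c1 c2 * INR N * s)). auto_derive; auto.
Qed.

Theorem lemma4p6 :
  forall (N d : nat) (kappa : R) (a : R -> R) (c1 c2 La C : R),
    (1 <= N)%nat -> (1 <= d)%nat -> 0 < kappa ->
    0 < c1 -> c1 <= c2 ->
    (forall r, 0 <= r -> c1 <= a r <= c2) ->
    0 < La ->
    (forall r1 r2, 0 <= r1 -> 0 <= r2 -> Rabs (a r1 - a r2) <= La * Rabs (r1 - r2)) ->
    0 < C < 1 ->
    forall (V0 Vb0 : nat -> vec),
    exists cb0 cb1 cb2 : R, 0 <= cb0 /\ 0 <= cb1 /\ 0 <= cb2 /\
    exists h0 : R, 0 < h0 /\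
    forall h : R, 0 < h -> h < h0 -> h < Rmin 1 (1 / kappa) ->
    forall (x v xb vb : nat -> nat -> vec),
      MT_solution N d kappa h a x v ->
      MT_solution N d kappa h a xb vb ->
      (forall i k, (i < N)%nat -> (k < d)%nat -> v O i k = V0 i k /\ vb O i k = Vb0 i k) ->
      Rmax (frob N d (DeltaM (x O))) (frob N d (DeltaM (xb O))) < Mconst N La c1 c2 ->
      frob N d (DeltaM (v O)) <
        kappa * RInt (psi N La c1 c2) (frob N d (DeltaM (x O))) (Mconst N La c1 c2) ->
      frob N d (DeltaM (vb O)) <
        kappa * RInt (psi N La c1 c2) (frob N d (DeltaM (xb O))) (Mconst N La c1 c2) ->
      forall eps : R, 0 <= eps <= 1 ->
      forall n : nat,
        frob N d (mdiff (DeltaM (v (S n))) (DeltaM (vb (S n)))) <=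
          (1 - eps) * frob N d (mdiff (DeltaM (v n)) (DeltaM (vb n)))
          + sqrt (cb0 * eps + cb1 * h + cb2 * h ^ 2)
            * exp (- (C * kappa * psi N La c1 c2 (Mconst N La c1 c2) * h) * INR n).
Proof.
  intros N d kappa a c1 c2 La C HN Hd Hk Hc1 Hc12 Ha HLa Hl HC V0 Vb0.
  set (K := frob N d (DeltaM V0)). set (Kb := frob N d (DeltaM Vb0)). set (T := K + Kb).
  assert (HT : 0 <= T) by (unfold T, K, Kb; pose proof (frob_nonneg N d (DeltaM V0)); pose proof (frob_nonneg N d (DeltaM Vb0)); lra).
  exists (2 * T ^ 2), 0, (8 * kappa ^ 2 * T ^ 2).
  split; [nra|split; [lra|split; [nra|]]].
  exists 1. split; [lra|].
  intros h Hh _ Hhm x v xb vb Hs Hsb Hinit HX HV HVb eps Heps n.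
  assert (Hhk : h * kappa < 1).
  { assert (h < 1 / kappa) by (eapply Rlt_le_trans; [apply Hhm|apply Rmin_r]).
    apply (Rmult_lt_compat_r kappa) in H; auto. unfold Rdiv in H. rewrite Rmult_assoc, Rinv_l in H; lra. }
  destruct (PM_quarter N La c1 c2 HN HLa Hc1 Hc12) as [HP HPM].
  set (P := phiLip N La c1 c2 * INR N) in *. set (M := Mconst N La c1 c2) in *.
  assert (HvK : frob N d (DeltaM (v O)) = K).
  { apply frob_ext. intros i j k Hi Hj Hk'. unfold DeltaM. rewrite (proj1 (Hinit i k Hi Hk')), (proj1 (Hinit j k Hj Hk')). auto. }
  assert (HvKb : frob N d (DeltaM (vb O)) = Kb).
  { apply frob_ext. intros i j k Hi Hj Hk'. unfold DeltaM. rewrite (proj2 (Hinit i k Hi Hk')), (proj2 (Hinit j k Hj Hk')). auto. }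
  assert (HX0 : frob N d (DeltaM (x O)) < M) by (eapply Rle_lt_trans; [apply Rmax_l|apply HX]).
  assert (HXb0 : frob N d (DeltaM (xb O)) < M) by (eapply Rle_lt_trans; [apply Rmax_r|apply HX]).
  rewrite RInt_psi in HV, HVb. fold P M in HV, HVb.
  assert (HG : frob N d (DeltaM (v O)) + Gf kappa P (frob N d (DeltaM (x O))) < Gf kappa P M) by (unfold Gf; nra).
  assert (HGb : frob N d (DeltaM (vb O)) + Gf kappa P (frob N d (DeltaM (xb O))) < Gf kappa P M) by (unfold Gf; nra).
  assert (I1 := invariant N d kappa h a c1 c2 La x v HN Hc1 Hc12 HLa Ha Hl Hs Hh Hk Hhk HX0 HG).
  assert (I2 := invariant N d kappa h a c1 c2 La xb vb HN Hc1 Hc12 HLa Ha Hl Hsb Hh Hk Hhk HXb0 HGb).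
  fold P M in I1, I2. rewrite HvK in I1. rewrite HvKb in I2.
  destruct (I1 n) as [HXn [_ HVn]]. destruct (I2 n) as [HXbn [_ HVbn]].
  set (b2 := C * kappa * psi N La c1 c2 M * h).
  assert (Hpsi : psi N La c1 c2 M = 3/4) by (unfold psi; fold P; lra).
  set (Ee := exp (- b2 * INR n)).
  assert (HEe : exp (- (3 / 4 * kappa * h) * INR n) <= Ee).
  { unfold Ee, b2. rewrite Hpsi. assert (0 <= INR n) by apply pos_INR.
    assert (- (3 / 4 * kappa * h) * INR n <= - (C * kappa * (3 / 4) * h) * INR n).
    { assert (0 <= (1 - C) * (3/4) * kappa * h * INR n). { repeat apply Rmult_le_pos; lra. } nra. }
    destruct H0 as [H0|H0]; [left; apply exp_increasing; auto|right; rewrite H0; auto]. }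
  assert (HEe0 : 0 <= Ee) by (left; apply exp_pos).
  set (Vn := frob N d (DeltaM (v n))) in *. set (Vbn := frob N d (DeltaM (vb n))) in *.
  assert (HVn0 : 0 <= Vn) by apply frob_nonneg. assert (HVbn0 : 0 <= Vbn) by apply frob_nonneg.
  assert (HK0 : 0 <= K) by apply frob_nonneg. assert (HKb0 : 0 <= Kb) by apply frob_nonneg.
  assert (HVE : Vn + Vbn <= T * Ee).
  { assert (0 <= exp (- (3 / 4 * kappa * h) * INR n)) by (left; apply exp_pos). unfold T. nra. }
  destruct (steps N d kappa h a c1 c2 La x v n HN Hc1 HLa Ha Hl Hs Hh Hk ltac:(lra)) as [_ [_ S1]].
  destruct (steps N d kappa h a c1 c2 La xb vb n HN Hc1 HLa Ha Hl Hsb Hh Hk ltac:(lra)) as [_ [_ S2]].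
  fold P Vn in S1. fold P Vbn in S2.
  set (Xn := frob N d (DeltaM (x n))) in *. set (Xbn := frob N d (DeltaM (xb n))) in *.
  assert (0 <= Xn) by apply frob_nonneg. assert (0 <= Xbn) by apply frob_nonneg.
  assert (Hhk0 : 0 < h * kappa) by nra.
  assert (S1' : frob N d (mdiff (DeltaM (v (S n))) (DeltaM (v n))) <= 2 * h * kappa * Vn).
  { eapply Rle_trans; [apply S1|]. assert (P * Xn <= 1/4) by nra. assert (P * Xn * Vn <= 1 * Vn) by (apply Rmult_le_compat_r; lra). nra. }
  assert (S2' : frob N d (mdiff (DeltaM (vb (S n))) (DeltaM (vb n))) <= 2 * h * kappa * Vbn).
  { eapply Rle_trans; [apply S2|]. assert (P * Xbn <= 1/4) by nra. assert (P * Xbn * Vbn <= 1 * Vbn) by (apply Rmult_le_compat_r; lra). nra. }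
  set (Y := fun i j k => mdiff (DeltaM (v (S n))) (DeltaM (v n)) i j k - mdiff (DeltaM (vb (S n))) (DeltaM (vb n)) i j k).
  assert (HY : frob N d Y <= 2 * h * kappa * (Vn + Vbn)).
  { eapply Rle_trans. { apply (frob_lin N d Y (mdiff (DeltaM (v (S n))) (DeltaM (v n))) (mdiff (DeltaM (vb (S n))) (DeltaM (vb n))) 1 (-1)). intros; unfold Y; ring. }
    rewrite (Rabs_left (-1)) by lra; rewrite Rabs_R1. lra. }
  assert (HD1 : frob N d (mdiff (DeltaM (v (S n))) (DeltaM (vb (S n)))) <=
     frob N d (mdiff (DeltaM (v n)) (DeltaM (vb n))) + frob N d Y).
  { eapply Rle_trans. { apply (frob_lin N d _ (mdiff (DeltaM (v n)) (DeltaM (vb n))) Y 1 1). intros; unfold Y, mdiff; ring. }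
    rewrite Rabs_R1. lra. }
  assert (HD2 : frob N d (mdiff (DeltaM (v n)) (DeltaM (vb n))) <= Vn + Vbn).
  { eapply Rle_trans. { apply (frob_lin N d _ (DeltaM (v n)) (DeltaM (vb n)) 1 (-1)). intros; unfold mdiff; ring. }
    rewrite (Rabs_left (-1)) by lra; rewrite Rabs_R1. unfold Vn, Vbn. lra. }
  set (D := frob N d (mdiff (DeltaM (v n)) (DeltaM (vb n)))) in *.
  assert (Hsq : eps * T + 2 * kappa * T * h <= sqrt (2 * T ^ 2 * eps + 0 * h + 8 * kappa ^ 2 * T ^ 2 * h ^ 2)).
  { assert (0 <= eps * T + 2 * kappa * T * h) by (assert (0 <= eps * T) by nra; assert (0 <= kappa * T * h) by (repeat apply Rmult_le_pos; lra); lra).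
    rewrite <- (sqrt_pow2 (eps * T + 2 * kappa * T * h)) by auto. apply sqrt_le_1_alt.
    assert (0 <= (eps * T - 2 * kappa * T * h) ^ 2) by apply pow2_ge_0.
    assert (eps ^ 2 <= eps) by nra. assert (0 <= T^2) by nra.
    assert (T^2 * eps^2 <= T^2 * eps) by (apply Rmult_le_compat_l; auto). nra. }
  fold b2. fold Ee.
  assert (D * eps <= (Vn + Vbn) * eps) by (apply Rmult_le_compat_r; lra).
  assert ((Vn + Vbn) * eps <= T * Ee * eps) by (apply Rmult_le_compat_r; lra).
  assert (2 * h * kappa * (Vn + Vbn) <= 2 * h * kappa * (T * Ee)) by (apply Rmult_le_compat_l; lra).
  assert ((eps * T + 2 * kappa * T * h) * Ee <= sqrt (2 * T ^ 2 * eps + 0 * h + 8 * kappa ^ 2 * T ^ 2 * h ^ 2) * Ee)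
    by (apply Rmult_le_compat_r; auto).
  nra.
Qed.
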